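(* Let $b,\ell\ge1$, $s=2^b$ and $m=(s/2)^\ell=2^{(b-1)\ell}$. Let $\mathcal F_{b,\ell}$ be the family of all graphs obtained from $G_{b,\ell}$ by deleting an arbitrary subset of the level-$\ell$ vertices $\{v_{\ell,\vec j}:\vec j\in[0,s-1]^\ell\}$ together with their incident edges. Then any distance labeling scheme for $\mathcal F_{b,\ell}$ assigns, for some graph in $\mathcal F_{b,\ell}$, to some vertex a label of at least $\textsc{SumIndex}(m)-b\ell$ bits.
   Context: Notation $[a,b]=\{a,\dots,b\}$. Fix $b,\ell\ge1$, $s=2^b$, $A=3\ell s^2$. The weighted graph $H_{b,\ell}$ has vertex set $\bigcup_{i=0}^{2\ell}V_i$, $V_i=\{v_{i,\vec j}:\vec j\in[0,s-1]^\ell\}$; for $i\in[0,2\ell-1]$ let $c(i)=i+1$ if $i<\ell$, $c(i)=2\ell-i$ if $i\ge\ell$; $v_{i,\vec j}$ and $v_{i+1,\vec j'}$ are adjacent iff $j_k=j'_k$ for all $k\ne c(i)$, with weight $A+(j_{c(i)}-j'_{c(i)})^2$; no other edges. The unweighted graph $G_{b,\ell}$: each $v\in V_i$ is kept and gets attached (root adjacent to $v$) a complete binary tree $T^{\mathrm{in}}_v$ of depth $b$ (only if $i>0$) with leaves $v^{\mathrm{in}}_u$ for the neighbors $u\in V_{i-1}$, and a complete binary tree $T^{\mathrm{out}}_v$ of depth $b$ (only if $i<2\ell$) with leaves $v^{\mathrm{out}}_u$ for the neighbors $u\in V_{i+1}$; trees disjoint; for each edge $e=\{u,v\}$ of $H_{b,\ell}$,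 $u\in V_i,v\in V_{i+1}$, the leaves $u^{\mathrm{out}}_v$ and $v^{\mathrm{in}}_u$ are joined by a path of length $w(e)-2b-2$ through new vertices. A distance labeling scheme for a family $\mathcal F$ of graphs consists of a fixed decoding function $f$ and, for each $G\in\mathcal F$, an assignment of binary strings $\mathsf{label}(u)$ to vertices $u\in V(G)$, such that $f(\mathsf{label}(u),\mathsf{label}(v))=\mathrm{dist}_G(u,v)$ for all $u,v$. Sum-Index problem on $\mathbb Z_n$: a string $S=S_0\dots S_{n-1}\in\{0,1\}^n$ is known to both Alice and Bob; Alice also holds $a\in[0,n-1]$, Bob holds $b'\in[0,n-1]$; each simultaneously sends one message to a referee, who must output $S_{(a+b')\bmod n}$ from the two messages alone. $\textsc{SumIndex}(n)$ denotes the minimum, over deterministic such protocols, of the maximum (over inputs and both players) message length in bits. *)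

(* Defs.v *)
From Stdlib Require Import ClassicalEpsilon.
From mathcomp Require Import all_boot.

Set Implicit Arguments.
Unset Strict Implicit.
Unset Printing Implicit Defensive.

Inductive reach {V : Type} (adj : V -> V -> Prop) : nat -> V -> V -> Prop :=
| reach0 x : reach adj 0 x x
| reachS k x w y : adj x w -> reach adj k w y -> reach adj k.+1 x y.

(* dist_is adj x y d : d is the graph distance from x to y;
   d = None encodes distance +infinity (x, y in different components). *)
Definition dist_is {V : Type} (adj : V -> V -> Prop) (x y : V)
  (d : option nat) : Prop :=
  match d with
  | Some n => reach adj n x y /\ (forall k, reach adj k x y -> n <= k)
  | None => forall k, ~ reach adj k x y
  end.

Definition sz (b : nat) : nat := 2 ^ b.
Definition AA (b l : nat) : nat := 3 * l * (sz b) ^ 2.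

(* j in [0,s-1]^l, represented as a list of length l;
   coordinate k in [1,l] is stored at (0-based) position k-1. *)
Definition is_vec (b l : nat) (j : seq nat) : bool :=
  (size j == l) && all (fun x => x < sz b) j.

Definition cc (l i : nat) : nat := if i < l then i + 1 else 2 * l - i.
(* 0-based list position of coordinate c(i) *)
Definition cpos (l i : nat) : nat := (cc l i).-1.

Definition absdiff (x y : nat) : nat := (x - y) + (y - x).

(* v_{i,j} ~ v_{i+1,j'} in H_{b,l} *)
Definition H_adj (b l i : nat) (j j' : seq nat) : Prop :=
  i < 2 * l /\ is_vec b l j /\ is_vec b l j' /\
  (forall k, 1 <= k <= l -> k != cc l i -> nth 0 j k.-1 = nth 0 j' k.-1).

Definition H_w (b l i : nat) (j j' : seq nat) : nat :=
  AA b l + (absdiff (nth 0 j (cpos l i)) (nth 0 j' (cpos l i))) ^ 2.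

(* Vertices:
   - Main i j            : v_{i,j}
   - TIn i j d p         : node of T^in_{v_{i,j}} at depth d (0 = root),
                           position p < 2^d; leaves have d = b
   - TOut i j d p        : node of T^out_{v_{i,j}}, same convention
   - PathV i j t k       : k-th vertex (0 < k < path length) of the path
                           subdividing the H-edge from v_{i,j} to
                           v_{i+1, j[c(i) := t]}. *)
Inductive vtx : Type :=
| Main of nat & seq nat
| TIn of nat & seq nat & nat & nat
| TOut of nat & seq nat & nat & nat
| PathV of nat & seq nat & nat & nat.

(* The out-neighbour of v_{i,j} in V_{i+1} attached to leaf t of T^out,
   and the in-neighbour of v_{i,j} in V_{i-1} attached to leaf t of T^in:
   the neighbour whose c-coordinate equals t. *)
Definition out_nbr (l i : nat) (j : seq nat) (t : nat) : seq nat :=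
  set_nth 0 j (cpos l i) t.
Definition in_nbr (l i : nat) (j : seq nat) (t : nat) : seq nat :=
  set_nth 0 j (cpos l i.-1) t.

(* length of the path replacing the H-edge from v_{i,j} to v_{i+1,j'} *)
Definition plen (b l i : nat) (j j' : seq nat) : nat :=
  H_w b l i j j' - 2 * b - 2.

(* k-th vertex (0 <= k <= plen) of the path for edge (v_{i,j}, out_nbr t):
   endpoints are the leaves u^out_v and v^in_u. *)
Definition pnode (b l i : nat) (j : seq nat) (t k : nat) : vtx :=
  let j' := out_nbr l i j t in
  if k == 0 then TOut i j b t
  else if k == plen b l i j j' then TIn i.+1 j' b (nth 0 j (cpos l i))
  else PathV i j t k.

Definition valid (b l : nat) (x : vtx) : Prop :=
  match x with
  | Main i j => i <= 2 * l /\ is_vec b l j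
  | TIn i j d p => 0 < i <= 2 * l /\ is_vec b l j /\ d <= b /\ p < 2 ^ d
  | TOut i j d p => i < 2 * l /\ is_vec b l j /\ d <= b /\ p < 2 ^ d
  | PathV i j t k =>
      i < 2 * l /\ is_vec b l j /\ t < sz b /\
      0 < k < plen b l i j (out_nbr l i j t)
  end.

Inductive gedge (b l : nat) : vtx -> vtx -> Prop :=
| e_root_in i j : gedge b l (Main i j) (TIn i j 0 0)
| e_root_out i j : gedge b l (Main i j) (TOut i j 0 0)
| e_in_l i j d p : d < b -> gedge b l (TIn i j d p) (TIn i j d.+1 p.*2)
| e_in_r i j d p : d < b -> gedge b l (TIn i j d p) (TIn i j d.+1 p.*2.+1)
| e_out_l i j d p : d < b -> gedge b l (TOut i j d p) (TOut i j d.+1 p.*2)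
| e_out_r i j d p : d < b -> gedge b l (TOut i j d p) (TOut i j d.+1 p.*2.+1)
| e_path i j t k :
    i < 2 * l -> is_vec b l j -> t < sz b ->
    k < plen b l i j (out_nbr l i j t) ->
    gedge b l (pnode b l i j t k) (pnode b l i j t k.+1).

Definition G_adj (b l : nat) (x y : vtx) : Prop :=
  valid b l x /\ valid b l y /\ (gedge b l x y \/ gedge b l y x).

(* D : seq nat -> bool describes the deleted set {v_{l,j} : D j}. *)
Definition present (b l : nat) (D : seq nat -> bool) (x : vtx) : Prop :=
  valid b l x /\
  match x with
  | Main i j => ~~ ((i == l) && D j)
  | _ => true
  end.

Definition GD_adj (b l : nat) (D : seq nat -> bool) (x y : vtx) : Prop :=
  G_adj b l x y /\ present b l D x /\ present b l D y.

Definition dls_for_F (b l : nat) (f : seq bool -> seq bool -> option nat)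
  (L : (seq nat -> bool) -> vtx -> seq bool) : Prop :=
  forall D x y, present b l D x -> present b l D y ->
    dist_is (GD_adj b l D) x y (f (L D x) (L D y)).

(* Alice: (S, a) |-> message; Bob: (S, b') |-> message;
   referee: (msgA, msgB) |-> bit. *)
Definition SI_correct (n : nat) (MA MB : seq bool -> nat -> seq bool)
  (R : seq bool -> seq bool -> bool) : Prop :=
  forall S a b', size S = n -> a < n -> b' < n ->
    R (MA S a) (MB S b') = nth false S ((a + b') %% n).

Definition SI_cost_le (n : nat) (MA MB : seq bool -> nat -> seq bool)
  (k : nat) : Prop :=
  forall S a, size S = n -> a < n -> size (MA S a) <= k /\ size (MB S a) <= k.

Definition SumIndex_le (n k : nat) : Prop :=
  exists MA MB R, SI_correct n MA MB R /\ SI_cost_le n MA MB k.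

Definition SumIndex_leb (n k : nat) : bool :=
  if excluded_middle_informative (SumIndex_le n k) then true else false.

Lemma SumIndex_le_exists (n : nat) : exists k, SumIndex_leb n k.
Proof.
exists (n + n); rewrite /SumIndex_leb.
case: excluded_middle_informative => // H; exfalso; apply: H.
pose MA := fun (S : seq bool) (a : nat) => nseq a true ++ false :: S.
pose MB := fun (S : seq bool) (b' : nat) => nseq b' true.
pose R := fun ma mb : seq bool =>
  let a := index false ma in let S := drop a.+1 ma in
  nth false S ((a + size mb) %% size S).
exists MA, MB, R; split.
- move=> S a b' hS ha hb; rewrite /R /MA /MB.
  have hi : index false (nseq a true ++ false :: S) = a.
    rewrite index_cat size_nseq /=.
    have -> : (false \in nseq a true) = false by rewrite mem_nseq andbF.
    by rewrite addn0.
  rewrite hi drop_cat size_nseq ltnNge leqnSn /= subSnn /= drop0 size_nseq hS.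
  done.
- move=> S a hS ha; rewrite /MA /MB size_cat !size_nseq /= hS; split.
  + by rewrite addnS -addSn leq_add2r.
  + by apply: leq_trans (leq_addl _ _); apply: ltnW.
Qed.

Definition SumIndex (n : nat) : nat := ex_minn (SumIndex_le_exists n).

(* Main.v *)
Require Import Defs.
From Stdlib Require Import Classical ClassicalEpsilon.
From mathcomp Require Import all_boot zify.


Lemma reach_cat {V : Type} (adj : V -> V -> Prop) {k k' x y z} :
  reach adj k x y -> reach adj k' y z -> reach adj (k + k') x z.
Proof.
elim=> [u|n u w v hu _ IH] h //=.
rewrite addSn; apply: (reachS hu); exact: IH.
Qed.

Lemma reach1 {V : Type} (adj : V -> V -> Prop) {x y} : adj x y -> reach adj 1 x y.
Proof. move=> h; apply: (reachS h); exact: reach0. Qed.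

Lemma reach_rev {V : Type} (adj : V -> V -> Prop) :
  (forall x y, adj x y -> adj y x) ->
  forall k x y, reach adj k x y -> reach adj k y x.
Proof.
move=> hs k x y; elim=> [u|n u w v hu _ IH]; first exact: reach0.
have := reach_cat _ IH (reach1 _ (hs _ _ hu)); by rewrite addn1.
Qed.

Lemma reach_pot {V : Type} (adj : V -> V -> Prop) (phi : V -> nat) :
  (forall x y, adj x y -> phi x <= phi y + 1) ->
  forall k x y, reach adj k x y -> phi x <= phi y + k.
Proof.
move=> hl k x y; elim=> [u|n u w v hu _ IH]; first by rewrite addn0.
have := hl _ _ hu; lia.
Qed.

Lemma GD_sym b l D x y : GD_adj b l D x y -> GD_adj b l D y x.
Proof. by case=> [[hx [hy he]] [px py]]; split; [split; [|split]; [| |tauto]|]. Qed.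

Lemma t2 (u v : nat) : (u+v)*(u+v) <= 2*(u*u+v*v).
Proof. case: (leqP u v) => h; nia. Qed.

Lemma L1 (x y q : nat) : (absdiff x q)^2 %/ 2 <= (absdiff y q)^2 + (absdiff x y)^2.
Proof.
rewrite -!mulnn.
set D := absdiff x q; set U := absdiff y q; set V := absdiff x y.
have hD : D <= U + V by rewrite /D /U /V /absdiff; lia.
have h1 : D * D <= (U+V)*(U+V) by apply: leq_mul.
have := t2 U V. lia.
Qed.

Lemma L2 (a c : nat) : (absdiff (2*a) (2*c))^2 %/ 2 = (absdiff (a+c) (2*c))^2 + (absdiff (2*a) (a+c))^2.
Proof.
rewrite /absdiff -!mulnn.
case: (leqP a c) => h1.
- have -> : 2*a - 2*c = 0 by lia.
  have -> : a + c - 2*c = 0 by lia.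
  have -> : 2*a - (a+c) = 0 by lia.
  have -> : 2*c - 2*a = 2*(c-a) by lia.
  have -> : 2*c - (a+c) = (c-a) by lia.
  have -> : a + c - 2*a = (c-a) by lia.
  rewrite ?add0n ?addn0. set e := c - a. nia.
- have -> : 2*c - 2*a = 0 by lia.
  have -> : 2*c - (a+c) = 0 by lia.
  have -> : a+c - 2*a = 0 by lia.
  have -> : 2*a - 2*c = 2*(a-c) by lia.
  have -> : a + c - 2*c = (a-c) by lia.
  have -> : 2*a - (a+c) = (a-c) by lia.
  rewrite ?add0n ?addn0. set e := a - c. nia.
Qed.

Lemma sqd (x y : nat) : (absdiff x y)*(absdiff x y) + 2*(x*y) = x*x+y*y.
Proof. rewrite /absdiff. case: (leqP x y) => h.
- have -> : x - y = 0 by lia. rewrite add0n. have [d ->] : exists d, y = x + d by exists (y-x); lia.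
  have -> : x + d - x = d by lia. nia.
- have -> : y - x = 0 by lia. rewrite addn0. have [d ->] : exists d, x = y + d by exists (x-y); lia.
  have -> : y + d - y = d by lia. nia.
Qed.

Lemma L3 (a c y : nat) : y != a + c -> (absdiff (2*a) (2*c))^2 %/ 2 + 2 <= (absdiff y (2*c))^2 + (absdiff (2*a) y)^2.
Proof.
move=> hy.
have hw : 1 <= absdiff y (a+c) by move: hy; rewrite /absdiff; lia.
have h1 := sqd y (2*c). have h2 := sqd (2*a) y. have h3 := sqd y (a+c). have h4 := sqd (2*a) (2*c).
rewrite -!mulnn.
set W := absdiff y (a + c) in hw h3.
have : 1 <= W * W by nia.
nia.
Qed.

Lemma cposE l i : cpos l i = if i < l then i else 2 * l - i - 1.
Proof. rewrite /cpos /cc; case: ifP; lia. Qed.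

Lemma cpos_lt {l i} : i < 2 * l -> cpos l i < l.
Proof. rewrite cposE; case: ifP; lia. Qed.

Definition Phi (b l : nat) (mn bi bo : nat -> seq nat -> nat) (x : vtx) : nat :=
  match x with
  | Main i j => mn i j
  | TIn i j d p => bi i j + d + 1
  | TOut i j d p => bo i j - (d + 1)
  | PathV i j t k =>
      maxn (bo i j - (b + 1) - k)
           (bi i.+1 (out_nbr l i j t) + (b + 1) - (plen b l i j (out_nbr l i j t) - k))
  end.

Definition C2 (b l : nat) (bi bo : nat -> seq nat -> nat) :=
  forall i j t, i < 2 * l -> is_vec b l j -> t < sz b ->
    b + 1 <= bo i j /\ 2 * b + 2 <= H_w b l i j (out_nbr l i j t) /\
    bo i j <= bi i.+1 (out_nbr l i j t) + H_w b l i j (out_nbr l i j t) /\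
    bi i.+1 (out_nbr l i j t) + 4 * b + 4 <= bo i j + H_w b l i j (out_nbr l i j t).

Lemma pnodeE b l mn bi bo i j t k :
  C2 b l bi bo -> i < 2 * l -> is_vec b l j -> t < sz b ->
  k <= plen b l i j (out_nbr l i j t) ->
  Phi b l mn bi bo (pnode b l i j t k) =
  maxn (bo i j - (b + 1) - k)
       (bi i.+1 (out_nbr l i j t) + (b + 1) - (plen b l i j (out_nbr l i j t) - k)).
Proof.
move=> hC hi hj ht hk; have [h1 [h2 [h3 h4]]] := hC i j t hi hj ht.
rewrite /pnode; case: eqP => [->|k0] /=.
  move: hk; rewrite /plen; lia.
case: eqP => [->|kp] //=.
move: hk; rewrite /plen; lia.
Qed.

Lemma Phi_lip b l D mn bi bo :
  (forall i j, present b l D (Main i j) -> bi i j = mn i j /\ bo i j = mn i j) ->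
  C2 b l bi bo ->
  forall x y, GD_adj b l D x y -> Phi b l mn bi bo x <= Phi b l mn bi bo y + 1.
Proof.
move=> hC1 hC.
suff H : forall x y, gedge b l x y -> present b l D x -> present b l D y ->
   Phi b l mn bi bo x <= Phi b l mn bi bo y + 1 /\ Phi b l mn bi bo y <= Phi b l mn bi bo x + 1.
  move=> x y [[_ [_ [he|he]]] [px py]].
  - by case: (H _ _ he px py).
  - by case: (H _ _ he py px).
move=> x y; case=> /=.
- move=> i j px _; have [-> _] := hC1 _ _ px; lia.
- move=> i j px _; have [_ ->] := hC1 _ _ px; lia.
- move=> *; lia.
- move=> *; lia.
- move=> *; lia.
- move=> *; lia.
- move=> i j t k hi hj ht hk _ _.
  rewrite (@pnodeE b l mn bi bo i j t k hC hi hj ht (ltnW hk)) (@pnodeE b l mn bi bo i j t k.+1 hC hi hj ht hk).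
  lia.
Qed.


Lemma vec_nth {b l j k} : is_vec b l j -> k < l -> nth 0 j k < sz b.
Proof.
case/andP=> /eqP hs /(all_nthP 0) ha hk; apply: ha; by rewrite hs.
Qed.

Lemma vec_mk b l j : size j = l -> (forall k, k < l -> nth 0 j k < sz b) -> is_vec b l j.
Proof.
move=> hs ha; apply/andP; split; first by rewrite hs.
apply/(all_nthP 0) => k; rewrite hs; exact: ha.
Qed.

Lemma out_vec {b l i j t} : i < 2 * l -> is_vec b l j -> t < sz b -> is_vec b l (out_nbr l i j t).
Proof.
move=> hi hj ht; have hc := cpos_lt hi.
have hs : size j = l by case/andP: hj => /eqP.
have hs' : size (out_nbr l i j t) = l.
  rewrite /out_nbr size_set_nth hs; lia.
apply: vec_mk => // k hk; rewrite /out_nbr nth_set_nth /=.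
case: (k == cpos l i) => //; exact: (vec_nth hj hk).
Qed.

Lemma pnode_valid {b l i j t k} : i < 2 * l -> is_vec b l j -> t < sz b ->
  k <= plen b l i j (out_nbr l i j t) -> valid b l (pnode b l i j t k).
Proof.
move=> hi hj ht hk; rewrite /pnode.
case: eqP => [_|k0] /=.
  by rewrite hi hj ht leqnn; split.
case: eqP => [_|kp] /=.
  split; first lia.
  split; first exact: out_vec.
  split=> //; apply: (vec_nth hj); exact: cpos_lt.
split=> //; split=> //; split=> //; lia.
Qed.

Lemma pnode_present {b l} D {i j t k} : i < 2 * l -> is_vec b l j -> t < sz b ->
  k <= plen b l i j (out_nbr l i j t) -> present b l D (pnode b l i j t k).
Proof.
move=> hi hj ht hk; have hv := pnode_valid hi hj ht hk.
split=> //; move: hv; rewrite /pnode; case: eqP => _ //; case: eqP => _ //.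
Qed.

Lemma path_walk b l D i j t : i < 2 * l -> is_vec b l j -> t < sz b ->
  forall n k, k + n = plen b l i j (out_nbr l i j t) ->
  reach (GD_adj b l D) n (pnode b l i j t k) (pnode b l i j t (plen b l i j (out_nbr l i j t))).
Proof.
move=> hi hj ht; elim=> [|n IH] k hk.
  rewrite addn0 in hk; rewrite hk; exact: reach0.
apply: (reachS (w := pnode b l i j t k.+1)); last by apply: IH; lia.
split; last split; try (apply: pnode_present; lia).
split; first (apply: pnode_valid; lia).
split; first (apply: pnode_valid; lia).
left; apply: e_path => //; lia.
Qed.

Lemma divSr t n : t %/ 2 ^ n.+1 = t %/ 2 ^ n %/ 2.
Proof. by rewrite expnSr divnMA. Qed.

Lemma half_cases q : q = (q %/ 2).*2 \/ q = (q %/ 2).*2.+1.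
Proof. rewrite divn2 -!muln2. have := odd_double_half q; rewrite -muln2. case: (odd q) => /= h; [right|left]; lia. Qed.

Lemma lt_div_pow t d n b : d + n = b -> t < 2 ^ b -> t %/ 2 ^ n < 2 ^ d.
Proof.
move=> <- ht; rewrite ltn_divLR ?expn_gt0 // -expnD; lia.
Qed.

Lemma tout_down b l D i j t : i < 2 * l -> is_vec b l j -> t < 2 ^ b ->
  forall n d, d + n = b -> reach (GD_adj b l D) n (TOut i j d (t %/ 2 ^ n)) (TOut i j b t).
Proof.
move=> hi hj ht; elim=> [|n IH] d hd.
  rewrite expn0 divn1 addn0 in hd *; rewrite hd; exact: reach0.
rewrite divSr; set q := t %/ 2 ^ n.
apply: (reachS (w := TOut i j d.+1 q)); last by apply: IH; lia.
have hq : q < 2 ^ d.+1 by apply: (@lt_div_pow t d.+1 n b) => //; lia.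
have hq2 : q %/ 2 < 2 ^ d by rewrite -divSr; apply: (@lt_div_pow t d n.+1 b) => //; lia.
have hdb : d < b by lia.
split; last by split; split=> //; split=> //; split=> //; lia.
split; first by split=> //; split=> //; split=> //; lia.
split; first by split=> //; split=> //; split=> //; lia.
left; case: (half_cases q) => e.
- have := e_out_l l i j (q %/ 2) hdb; by rewrite -e.
- have := e_out_r l i j (q %/ 2) hdb; by rewrite -e.
Qed.

Lemma tin_down b l D i j t : 0 < i <= 2 * l -> is_vec b l j -> t < 2 ^ b ->
  forall n d, d + n = b -> reach (GD_adj b l D) n (TIn i j d (t %/ 2 ^ n)) (TIn i j b t).
Proof.
move=> hi hj ht; elim=> [|n IH] d hd.
  rewrite expn0 divn1 addn0 in hd *; rewrite hd; exact: reach0.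
rewrite divSr; set q := t %/ 2 ^ n.
apply: (reachS (w := TIn i j d.+1 q)); last by apply: IH; lia.
have hq : q < 2 ^ d.+1 by apply: (@lt_div_pow t d.+1 n b) => //; lia.
have hq2 : q %/ 2 < 2 ^ d by rewrite -divSr; apply: (@lt_div_pow t d n.+1 b) => //; lia.
have hdb : d < b by lia.
split; last by split; split=> //; split=> //; split=> //; lia.
split; first by split=> //; split=> //; split=> //; lia.
split; first by split=> //; split=> //; split=> //; lia.
left; case: (half_cases q) => e.
- have := e_in_l l i j (q %/ 2) hdb; by rewrite -e.
- have := e_in_r l i j (q %/ 2) hdb; by rewrite -e.
Qed.

Lemma seg b l D i j t : i < 2 * l -> is_vec b l j -> t < sz b ->
  2 * b + 2 < H_w b l i j (out_nbr l i j t) ->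
  present b l D (Main i j) -> present b l D (Main i.+1 (out_nbr l i j t)) ->
  reach (GD_adj b l D) (H_w b l i j (out_nbr l i j t)) (Main i j) (Main i.+1 (out_nbr l i j t)).
Proof.
move=> hi hj ht hw pu pv.
set j' := out_nbr l i j t.
rewrite -/j' in hw pv.
have hj' : is_vec b l j' := out_vec hi hj ht.
set p := nth 0 j (cpos l i).
have hp : p < 2 ^ b by apply: (vec_nth hj); exact: cpos_lt.
have hpl : 0 < plen b l i j j' by rewrite /plen; lia.
have e1 : GD_adj b l D (Main i j) (TOut i j 0 0).
  split; last by split=> //; split=> //; split=> //; split=> //; split=> //.
  split; first by case: pu.
  split; first by split=> //; split=> //.
  left; exact: e_root_out.
have r1 : reach (GD_adj b l D) b (TOut i j 0 0) (TOut i j b t).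
  have := @tout_down b l D i j t hi hj ht b 0 (add0n _).
  by rewrite divn_small.
have r2 := @path_walk b l D i j t hi hj ht (plen b l i j j') 0 (add0n _).
have E0 : pnode b l i j t 0 = TOut i j b t by [].
have E1 : pnode b l i j t (plen b l i j j') = TIn i.+1 j' b p.
  rewrite /pnode; case: eqP => [h|_]; first lia. by rewrite eqxx.
rewrite E0 E1 in r2.
have r3 : reach (GD_adj b l D) b (TIn i.+1 j' b p) (TIn i.+1 j' 0 0).
  apply: (@reach_rev _ (GD_adj b l D) (@GD_sym b l D)).
  have := @tin_down b l D i.+1 j' p ltac:(lia) hj' hp b 0 (add0n _).
  by rewrite divn_small.
have e2 : GD_adj b l D (TIn i.+1 j' 0 0) (Main i.+1 j').
  apply: GD_sym.
  split; last by split=> //; split=> //; split=> //; split=> //; split=> //; lia.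
  split; first by case: pv.
  split; first by split=> //; split=> //; lia.
  left; exact: e_root_in.
have := reach_cat _ (reachS e1 r1) (reach_cat _ r2 (reach_cat _ r3 (reach1 _ e2))).
have -> : (b.+1 + (plen b l i j j' + (b + 1))) = H_w b l i j j' by rewrite /plen; lia.
done.
Qed.


Definition term (b l i k z : nat) : nat :=
  if k < minn i (2 * l - i) then z ^ 2
  else if i < l then z ^ 2 %/ 2 else (sz b) ^ 2 * (z != 0).

Definition gpot (b l : nat) (Qf : nat -> nat) (i : nat) (j : seq nat) : nat :=
  \sum_(k < l) term b l i k (absdiff (nth 0 j k) (Qf k)).

Definition main0 b l Qf i j := (2 * l - i) * AA b l + gpot b l Qf i j.

Lemma sum_swap1 n c (F G : nat -> nat) : c < n ->
  (forall k, k < n -> k != c -> F k = G k) ->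
  \sum_(k < n) F k + G c = \sum_(k < n) G k + F c.
Proof.
move=> hc hFG.
rewrite [\sum_(k < n) F k](bigD1 (Ordinal hc)) //= [\sum_(k < n) G k](bigD1 (Ordinal hc)) //=.
have e : \sum_(k < n | k != Ordinal hc) F k = \sum_(k < n | k != Ordinal hc) G k.
  apply: eq_bigr => k hk; apply: hFG; first exact: ltn_ord.
  apply: contra hk => /eqP e; apply/eqP; apply: val_inj; exact e.
rewrite e [RHS]addnC [G c + _]addnC addnA //.
Qed.

Lemma term_lo b l i k z : k < minn i (2 * l - i) -> term b l i k z = z ^ 2.
Proof. by rewrite /term => ->. Qed.
Lemma term_mid b l i k z : ~~ (k < minn i (2 * l - i)) -> i < l -> term b l i k z = z ^ 2 %/ 2.
Proof. by rewrite /term => /negbTE -> ->. Qed.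
Lemma term_hi b l i k z : ~~ (k < minn i (2 * l - i)) -> ~~ (i < l) -> term b l i k z = (sz b) ^ 2 * (z != 0).
Proof. by rewrite /term => /negbTE -> /negbTE ->. Qed.

Lemma term_same b l i k z : i < 2 * l -> k < l -> k != cpos l i ->
  term b l i k z = term b l i.+1 k z.
Proof.
rewrite cposE => hi hk /eqP hc.
case: (ltnP k (minn i (2 * l - i))) => h1.
  rewrite term_lo // term_lo //. move: hc; case: ifP => *; lia.
case: (ltnP i l) => h2.
  rewrite term_mid -?ltnNge // term_mid //; move: hc; case: ifP => *; lia.
rewrite term_hi -?ltnNge // term_hi //; move: hc; case: ifP => *; lia.
Qed.

Lemma gswap {b l} Qf {i} j t : i < 2 * l ->
  gpot b l Qf i j + term b l i.+1 (cpos l i) (absdiff t (Qf (cpos l i))) =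
  gpot b l Qf i.+1 (out_nbr l i j t) + term b l i (cpos l i) (absdiff (nth 0 j (cpos l i)) (Qf (cpos l i))).
Proof.
move=> hi; rewrite /gpot.
have := @sum_swap1 l (cpos l i) (fun k => term b l i k (absdiff (nth 0 j k) (Qf k)))
  (fun k => term b l i.+1 k (absdiff (nth 0 (out_nbr l i j t) k) (Qf k))) (cpos_lt hi).
rewrite /out_nbr nth_set_nth /= eqxx => -> //.
move=> k hk hkc; rewrite nth_set_nth /= (negbTE hkc); exact: term_same.
Qed.

Lemma absdiff_lt x y s : x < s -> y < s -> absdiff x y < s.
Proof. rewrite /absdiff; lia. Qed.

Lemma term_le b l i k z : z < sz b -> term b l i k z <= (sz b) ^ 2.
Proof.
move=> hz; rewrite /term -!mulnn.
have h : z * z <= sz b * sz b by apply: leq_mul; apply: ltnW.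
case: ifP => _ //; case: ifP => _.
  apply: leq_trans h; exact: leq_div.
case: (z != 0); lia.
Qed.

Lemma gbound b l Qf i j : is_vec b l j -> (forall k, k < l -> Qf k < sz b) ->
  gpot b l Qf i j <= l * (sz b) ^ 2.
Proof.
move=> hj hQ; rewrite /gpot.
apply: leq_trans (_ : \sum_(k < l) (sz b) ^ 2 <= _).
  apply: leq_sum => k _; apply: term_le; apply: absdiff_lt.
  exact: (vec_nth hj (ltn_ord k)). exact: hQ.
by rewrite sum_nat_const card_ord.
Qed.

Lemma gineq b l Qf i j t : i < 2 * l -> is_vec b l j -> t < sz b ->
  (forall k, k < l -> Qf k < sz b) ->
  gpot b l Qf i j <= gpot b l Qf i.+1 (out_nbr l i j t) + (absdiff (nth 0 j (cpos l i)) t) ^ 2.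
Proof.
move=> hi hj ht hQ; have e := @gswap b l Qf i j t hi.
set c := cpos l i in e *.
have hc : c < l := cpos_lt hi.
set x := nth 0 j c in e *; set q := Qf c in e *.
have hx : x < sz b := vec_nth hj hc.
have hq : q < sz b := hQ c hc.
suff : term b l i c (absdiff x q) <= term b l i.+1 c (absdiff t q) + (absdiff x t) ^ 2 by lia.
rewrite /c cposE; case: (ltnP i l) => h.
- rewrite term_mid ?term_lo -?ltnNge //; [exact: L1 | lia | lia].
- rewrite term_lo ?term_hi -?ltnNge //; try lia.
  case: (eqVneq t q) => [->|htq].
    by rewrite /absdiff subnn addn0 eqxx muln0.
  have : absdiff x q < sz b by exact: absdiff_lt.
  have -> : (absdiff t q != 0) = true.
    apply/negP => /eqP; move: htq => /eqP; rewrite /absdiff; lia.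
  rewrite muln1 -!mulnn => hh.
  have : absdiff x q * absdiff x q <= sz b * sz b by apply: leq_mul; exact: ltnW.
  lia.
Qed.


Definition Jv (l : nat) (da db : nat -> nat) (i k : nat) : nat :=
  if k < minn i (2 * l - i) then da k + db k
  else if i < l then 2 * da k else 2 * db k.

Definition Jseq l da db i := mkseq (Jv l da db i) l.

Lemma Jv_same l da db i k : i < 2 * l -> k < l -> k != cpos l i ->
  Jv l da db i k = Jv l da db i.+1 k.
Proof.
rewrite cposE /Jv => hi hk /eqP hc.
case: (ltnP k (minn i (2 * l - i))) => h1.
  have -> : k < minn i.+1 (2 * l - i.+1) by move: hc; case: ifP => *; lia.
  done.
have -> : (k < minn i.+1 (2 * l - i.+1)) = false by move: hc; case: ifP => *; lia.
case: (ltnP i l) => h2.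
  have -> : i.+1 < l by move: hc; case: ifP => *; lia.
  done.
have -> : (i.+1 < l) = false by lia.
done.
Qed.

Lemma Jstep l da db i : i < 2 * l ->
  out_nbr l i (Jseq l da db i) (Jv l da db i.+1 (cpos l i)) = Jseq l da db i.+1.
Proof.
move=> hi; have hc := cpos_lt hi.
apply: (@eq_from_nth _ 0).
  rewrite /out_nbr size_set_nth /Jseq !size_mkseq; lia.
move=> k; rewrite /out_nbr size_set_nth /Jseq !size_mkseq => hk.
have hk' : k < l by lia.
rewrite nth_set_nth /= !nth_mkseq //.
case: eqP => [->|/eqP hkc] //.
exact: Jv_same.
Qed.

Definition Qf (db : nat -> nat) := fun k => 2 * db k.

Lemma nthJ l da db i k : k < l -> nth 0 (Jseq l da db i) k = Jv l da db i k.
Proof. move=> hk; exact: nth_mkseq. Qed.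

Lemma geqJ b l da db i : i < 2 * l ->
  gpot b l (Qf db) i (Jseq l da db i) =
  gpot b l (Qf db) i.+1 (Jseq l da db i.+1) +
  (absdiff (Jv l da db i (cpos l i)) (Jv l da db i.+1 (cpos l i))) ^ 2.
Proof.
move=> hi; have hc := cpos_lt hi.
have e := @gswap b l (Qf db) i (Jseq l da db i) (Jv l da db i.+1 (cpos l i)) hi.
rewrite Jstep // nthJ // in e.
suff : term b l i (cpos l i) (absdiff (Jv l da db i (cpos l i)) (Qf db (cpos l i))) =
  term b l i.+1 (cpos l i) (absdiff (Jv l da db i.+1 (cpos l i)) (Qf db (cpos l i))) +
  (absdiff (Jv l da db i (cpos l i)) (Jv l da db i.+1 (cpos l i))) ^ 2 by lia.
case: (ltnP i l) => h.
- have ec : cpos l i = i by rewrite cposE h.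
  rewrite ec /Qf /Jv.
  rewrite (_ : i < minn i (2 * l - i) = false); last lia.
  rewrite (_ : i < minn i.+1 (2 * l - i.+1) = true); last lia.
  rewrite h term_mid ?term_lo -?ltnNge; try lia.
  rewrite L2; lia.
- have ec : cpos l i = 2 * l - i - 1 by rewrite cposE ltnNge h.
  rewrite ec /Qf /Jv (_ : i < l = false); last lia.
  rewrite (_ : 2 * l - i - 1 < minn i (2 * l - i) = true); last lia.
  rewrite (_ : 2 * l - i - 1 < minn i.+1 (2 * l - i.+1) = false); last lia.
  rewrite (_ : i.+1 < l = false); last lia.
  rewrite term_lo ?term_hi -?ltnNge; try lia.
  by rewrite /absdiff subnn addn0 eqxx muln0 add0n.
Qed.

Lemma gstrict b l da db i t : i < l ->
  gpot b l (Qf db) i (Jseq l da db i) + 1 <=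
  gpot b l (Qf db) i.+1 (out_nbr l i (Jseq l da db i) t) +
  (absdiff (nth 0 (Jseq l da db i) (cpos l i)) t) ^ 2 +
  (out_nbr l i (Jseq l da db i) t == Jseq l da db i.+1).
Proof.
move=> hil; have hi : i < 2 * l by lia.
have hc := cpos_lt hi.
have ec : cpos l i = i by rewrite cposE hil.
have e := @gswap b l (Qf db) i (Jseq l da db i) t hi.
rewrite nthJ // in e *.
have eJ : Jv l da db i i = 2 * da i.
  by rewrite /Jv (_ : i < minn i (2 * l - i) = false) ?hil //; lia.
rewrite ec eJ in e *.
have eQ : Qf db i = 2 * db i by [].
rewrite (@term_lo b l i.+1 i) ?(@term_mid b l i i) -?ltnNge ?eQ in e; try lia.
case: (eqVneq t (da i + db i)) => ht.
- have eJ1 : Jv l da db i.+1 (cpos l i) = da i + db i.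
    by rewrite ec /Jv (_ : i < minn i.+1 (2 * l - i.+1) = true) //; lia.
  have EJ := @Jstep l da db i hi; rewrite eJ1 -ht in EJ; rewrite EJ in e *; rewrite eqxx /=.
  subst t; rewrite L2 in e; lia.
- have := L3 (da i) (db i) t ht; lia.
Qed.


Lemma Hw_out b l i j t : H_w b l i j (out_nbr l i j t) = AA b l + (absdiff (nth 0 j (cpos l i)) t) ^ 2.
Proof. by rewrite /H_w /out_nbr nth_set_nth /= eqxx. Qed.

Lemma Afacts b l : 1 <= l -> b + 1 <= sz b ^ 2 /\ AA b l = 3 * (l * sz b ^ 2) /\ sz b ^ 2 <= l * sz b ^ 2.
Proof.
move=> hl; have hs : b < sz b by rewrite /sz; apply: ltn_expl.
split; first by rewrite -mulnn; nia.
split; first by rewrite /AA mulnA.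
by rewrite leq_pmull.
Qed.

Lemma mulS_sub l i A : i < 2 * l -> (2 * l - i) * A = A + (2 * l - i.+1) * A.
Proof. move=> hi; rewrite (_ : 2 * l - i = (2 * l - i.+1).+1); last lia. by rewrite mulSn. Qed.

Definition bo1 b l da db i j := main0 b l (Qf db) i j + ((i < l) && (j == Jseq l da db i)).
Definition bi1 b l da db i j := main0 b l (Qf db) i j + ((i <= l) && (j == Jseq l da db i)).

Lemma C2_gen b l db (e1 e2 : nat -> seq nat -> nat) :
  1 <= l -> (forall k, k < l -> Qf db k < sz b) ->
  (forall i j, e1 i j <= 1) -> (forall i j, e2 i j <= 1) ->
  (forall i j t, i < 2 * l -> is_vec b l j -> t < sz b ->
     gpot b l (Qf db) i j + e1 i j <= gpot b l (Qf db) i.+1 (out_nbr l i j t) +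
       (absdiff (nth 0 j (cpos l i)) t) ^ 2 + e2 i.+1 (out_nbr l i j t)) ->
  C2 b l (fun i j => main0 b l (Qf db) i j + e2 i j) (fun i j => main0 b l (Qf db) i j + e1 i j).
Proof.
move=> hl hQ he1 he2 hg i j t hi hj ht.
have [f1 [f2 f3]] := Afacts b l hl.
have hj' := out_vec hi hj ht.
have gb := @gbound b l (Qf db) i.+1 _ hj' hQ.
have := hg i j t hi hj ht.
have := he1 i j; have := he2 i.+1 (out_nbr l i j t).
rewrite Hw_out /main0 (@mulS_sub l i (AA b l) hi).
move: f1 f2 f3 gb; set A := AA b l; set Z := l * sz b ^ 2; move=> f1 f2 f3 gb.
set Y := (2 * l - i.+1) * A.
set g1 := gpot b l (Qf db) i j.
set g2 := gpot b l (Qf db) i.+1 (out_nbr l i j t).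
set dd := absdiff _ t ^ 2.
lia.
Qed.


Lemma Jvec {b l da db h} i : sz b = 2 * h -> (forall k, da k < h) -> (forall k, db k < h) ->
  is_vec b l (Jseq l da db i).
Proof.
move=> hs hda hdb; apply: vec_mk; first by rewrite size_mkseq.
move=> k hk; rewrite nthJ // /Jv hs.
have := hda k; have := hdb k.
case: ifP => _; [lia| case: ifP => _; lia].
Qed.

Lemma Qvalid {b l db h} : sz b = 2 * h -> (forall k, db k < h) -> forall k, k < l -> Qf db k < sz b.
Proof. move=> hs hdb k _; rewrite /Qf hs; have := hdb k; lia. Qed.

Lemma main0_end b l da db : main0 b l (Qf db) (2 * l) (Jseq l da db (2 * l)) = 0.
Proof.
rewrite /main0 subnn mul0n add0n /gpot big1 // => k _.
have e1 : (k < minn (2 * l) (2 * l - 2 * l)) = false by lia.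
have e2 : (2 * l < l) = false by lia.
rewrite nthJ // /Jv e1 e2 /Qf /absdiff subnn /= /term e1 e2.
by rewrite muln0.
Qed.

Lemma lb0 b l D da db h k : 1 <= l -> sz b = 2 * h -> (forall k, db k < h) ->
  reach (GD_adj b l D) k (Main 0 (Jseq l da db 0)) (Main (2 * l) (Jseq l da db (2 * l))) ->
  main0 b l (Qf db) 0 (Jseq l da db 0) <= k.
Proof.
move=> hl hs hdb hr.
pose mn := fun i j => main0 b l (Qf db) i j + 0.
have hC : C2 b l mn mn.
  apply: (@C2_gen b l db (fun _ _ => 0) (fun _ _ => 0)) => //.
  - exact: (Qvalid hs hdb).
  - move=> i j t hi hj ht; rewrite !addn0; exact: @gineq b l (Qf db) i j t hi hj ht (Qvalid hs hdb).
have := @reach_pot _ _ _ (@Phi_lip b l D mn mn mn (fun i j _ => conj erefl erefl) hC) _ _ _ hr.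
by rewrite /= /mn main0_end !addn0 add0n.
Qed.

Lemma lb1 b l (D : seq nat -> bool) da db h k : 1 <= l -> sz b = 2 * h -> (forall k, db k < h) ->
  D (Jseq l da db l) = true ->
  reach (GD_adj b l D) k (Main 0 (Jseq l da db 0)) (Main (2 * l) (Jseq l da db (2 * l))) ->
  main0 b l (Qf db) 0 (Jseq l da db 0) + 1 <= k.
Proof.
move=> hl hs hdb hD hr.
pose e1 := fun i j => ((i < l) && (j == Jseq l da db i) : nat).
pose e2 := fun i j => ((i <= l) && (j == Jseq l da db i) : nat).
pose bo := fun i j => main0 b l (Qf db) i j + e1 i j.
pose bi := fun i j => main0 b l (Qf db) i j + e2 i j.
have hC : C2 b l bi bo.
  apply: (@C2_gen b l db e1 e2) => //.
  - exact: (Qvalid hs hdb).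
  - by move=> i j; rewrite /e1; case: (_ && _).
  - by move=> i j; rewrite /e2; case: (_ && _).
  - move=> i j t hi hj ht; rewrite /e1 /e2.
    case: (ltnP i l) => hil /=.
    + case: eqP => [->|_] /=.
        exact: gstrict.
      rewrite addn0; apply: leq_trans (@gineq b l (Qf db) i j t hi hj ht (Qvalid hs hdb)) _; lia.
    + have := @gineq b l (Qf db) i j t hi hj ht (Qvalid hs hdb); lia.
have hC1 : forall i j, present b l D (Main i j) -> bi i j = bo i j /\ bo i j = bo i j.
  move=> i j [_ /= hp]; split=> //; rewrite /bi /bo /e1 /e2.
  case: (ltngtP i l) => hil //=.
  subst i; case: eqP => [ej|] //=; exfalso.
  by move: hp; rewrite eqxx ej hD.
have := @reach_pot _ _ _ (@Phi_lip b l D bo bi bo hC1 hC) _ _ _ hr.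
rewrite /= /bo /e1 main0_end eqxx hl /= (_ : 2 * l < l = false) /=; last lia.
lia.
Qed.

Lemma walk b l D da db h : 1 <= b -> 1 <= l -> sz b = 2 * h ->
  (forall k, da k < h) -> (forall k, db k < h) ->
  D (Jseq l da db l) = false ->
  reach (GD_adj b l D) (main0 b l (Qf db) 0 (Jseq l da db 0))
    (Main 0 (Jseq l da db 0)) (Main (2 * l) (Jseq l da db (2 * l))).
Proof.
move=> hb hl hs hda hdb hD.
have hJ := fun i => @Jvec b l da db h i hs hda hdb.
have pres : forall i, i <= 2 * l -> present b l D (Main i (Jseq l da db i)).
  move=> i hi; split; first by split.
  by case: eqP => [->|] //=; rewrite hD.
suff H : forall n, n <= 2 * l ->
  reach (GD_adj b l D) (main0 b l (Qf db) (2 * l - n) (Jseq l da db (2 * l - n)))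
    (Main (2 * l - n) (Jseq l da db (2 * l - n))) (Main (2 * l) (Jseq l da db (2 * l))).
  have := H (2 * l) (leqnn _); by rewrite subnn.
elim=> [|n IH] hn.
  rewrite subn0 main0_end; exact: reach0.
set i := 2 * l - n.+1.
have hi : i < 2 * l by rewrite /i; lia.
have ei : i.+1 = 2 * l - n by rewrite /i; lia.
set t := Jv l da db i.+1 (cpos l i).
have ht : t < sz b.
  have := vec_nth (hJ i.+1) (cpos_lt hi); by rewrite nthJ // (cpos_lt hi).
have EJ := @Jstep l da db i hi.
have [f1 [f2 f3]] := Afacts b l hl.
have hw : 2 * b + 2 < H_w b l i (Jseq l da db i) (out_nbr l i (Jseq l da db i) t).
  rewrite Hw_out f2; lia.
have := @seg b l D i (Jseq l da db i) t hi (hJ i) ht hw (pres i (ltnW hi)).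
rewrite -/t EJ ei => /(_ (pres _ (leq_subr _ _))) r1.
have := reach_cat _ r1 (IH (ltnW hn)).
rewrite -ei.
have -> : H_w b l i (Jseq l da db i) (Jseq l da db i.+1) +
   main0 b l (Qf db) i.+1 (Jseq l da db i.+1) = main0 b l (Qf db) i (Jseq l da db i).
  rewrite /main0 (@mulS_sub l i (AA b l) hi) (@geqJ b l da db i hi) /H_w !nthJ //; try exact: cpos_lt.
  lia.
done.
Qed.


Definition dig (h a k : nat) : nat := a %/ h ^ k %% h.

Lemma digsum h n a : 0 < h -> a < h ^ n -> \sum_(k < n) dig h a k * h ^ k = a.
Proof.
move=> hh; elim: n a => [|n IH] a ha.
  by rewrite big_ord0; move: ha; rewrite expn0; lia.
rewrite big_ord_recl /= /dig expn0 divn1 muln1.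
have e : \sum_(i < n) a %/ h ^ (bump 0 i) %% h * h ^ (bump 0 i) =
   (\sum_(i < n) dig h (a %/ h) i * h ^ i) * h.
  rewrite big_distrl /=; apply: eq_bigr => k _.
  by rewrite /dig /bump /= add1n expnS divnMA [h * _]mulnC mulnA.
rewrite e IH; last by rewrite ltn_divLR // -expnSr.
by rewrite addnC -divn_eq.
Qed.

Definition enc (n a : nat) : seq bool := mkseq (fun i => odd (a %/ 2 ^ i)) n.
Definition dec (bs : seq bool) : nat := \sum_(i < size bs) nth false bs i * 2 ^ i.

Lemma dec_enc n a : a < 2 ^ n -> dec (enc n a) = a.
Proof.
move=> ha; rewrite /dec /enc size_mkseq.
rewrite -{2}(@digsum 2 n a) //; apply: eq_bigr => k _.
by rewrite nth_mkseq // /dig modn2.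
Qed.

Lemma size_enc n a : size (enc n a) = n.
Proof. exact: size_mkseq. Qed.


Theorem mainTheorem8 (b l : nat) (hb : 1 <= b) (hl : 1 <= l)
  (f : seq bool -> seq bool -> option nat)
  (L : (seq nat -> bool) -> vtx -> seq bool) :
  dls_for_F b l f L ->
  exists (D : seq nat -> bool) (x : vtx),
    present b l D x /\
    SumIndex (2 ^ ((b - 1) * l)) - b * l <= size (L D x).
Proof.
move=> hdls.
set w := (b - 1) * l.
set m := 2 ^ w.
set h := 2 ^ (b - 1).
have hh : 0 < h by rewrite expn_gt0.
have hs : sz b = 2 * h by rewrite /sz /h -expnS; congr (2 ^ _); lia.
have hm : m = h ^ l by rewrite /m /h /w expnM.
have hwl : w <= b * l by rewrite /w leq_mul2r leq_subr orbT.
pose DS := fun (S : seq bool) (y : seq nat) => ~~ nth false S ((\sum_(k < l) nth 0 y k * h ^ k) %% m).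
pose Pv := fun a => mkseq (fun k => 2 * dig h a k) l.
have hdig : forall a k, dig h a k < h by move=> a k; rewrite /dig ltn_mod.
have J0 : forall a b', Jseq l (dig h a) (dig h b') 0 = Pv a.
  move=> a b'; apply: eq_mkseq => k; rewrite /Jv (_ : k < minn 0 (2 * l - 0) = false) ?hl //; lia.
have J2 : forall a b', Jseq l (dig h a) (dig h b') (2 * l) = Pv b'.
  move=> a b'; apply: eq_mkseq => k; rewrite /Jv (_ : k < minn (2 * l) (2 * l - 2 * l) = false); last lia.
  rewrite (_ : 2 * l < l = false) //; lia.
have pres0 : forall S a, present b l (DS S) (Main 0 (Pv a)).
  move=> S a; split; first (split => //; rewrite -(J0 a 0); exact: (@Jvec b l _ _ h 0 hs)).
  rewrite /= (_ : (0 == l) = false) //; lia.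
have pres2 : forall S a, present b l (DS S) (Main (2 * l) (Pv a)).
  move=> S a; split; first (split => //; rewrite -(J2 0 a); exact: (@Jvec b l _ _ h _ hs)).
  rewrite /= (_ : (2 * l == l) = false) //; lia.
apply: NNPP => hne.
have hsmall : forall D x, present b l D x -> size (L D x) < SumIndex m - b * l.
  move=> D x px; rewrite ltnNge; apply/negP => hle; apply: hne; by exists D, x.
set SI := SumIndex m in hsmall *.
have hSI : b * l < SI.
  have := hsmall _ _ (pres0 [::] 0); lia.
pose MA := fun S a => enc w a ++ L (DS S) (Main 0 (Pv a)).
pose MB := fun S a => enc w a ++ L (DS S) (Main (2 * l) (Pv a)).
pose Tv := fun a b' => main0 b l (Qf (dig h b')) 0 (Pv a).
pose R := fun ma mb : seq bool =>
  f (drop w ma) (drop w mb) == Some (Tv (dec (take w ma)) (dec (take w mb))).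
have hle : SumIndex_le m (SI - 1).
  exists MA, MB, R; split.
  - move=> S a b' hS ha hb'.
    rewrite /R /MA /MB !take_size_cat ?size_enc // !drop_size_cat ?size_enc // !dec_enc //.
    set D := DS S.
    have hd := hdls D _ _ (pres0 S a) (pres2 S b').
    have hX : D (Jseq l (dig h a) (dig h b') l) = ~~ nth false S ((a + b') %% m).
      rewrite /D /DS; congr (~~ nth _ _ (_ %% _)).
      transitivity (\sum_(k < l) (dig h a k * h ^ k + dig h b' k * h ^ k)).
        apply: eq_bigr => k _; have hk := ltn_ord k; rewrite nthJ // /Jv (_ : k < minn l (2 * l - l) = true) ?mulnDl //; lia.
      by rewrite big_split /= !digsum // -hm.
    rewrite -(J0 a b') -(J2 a b') in hd.
    rewrite /Tv -(J0 a b') -(J2 a b').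
    case hbit: (nth false S ((a + b') %% m)).
    + rewrite hbit /= in hX.
      have hw := @walk b l D (dig h a) (dig h b') h hb hl hs (hdig a) (hdig b') hX.
      move: hd; case: (f _ _) => [n [hr hmn]|hnone].
      * have h1 := hmn _ hw.
        have h2 := @lb0 b l D (dig h a) (dig h b') h n hl hs (hdig b') hr.
        apply/eqP; congr Some; lia.
      * exfalso; exact: hnone _ hw.
    + rewrite hbit in hX.
      move: hd; case: (f _ _) => [n [hr _]|//].
      have h1 := @lb1 b l D (dig h a) (dig h b') h n hl hs (hdig b') hX hr.
      apply/eqP => [[e]]; lia.
  - move=> S a hS ha; rewrite /MA /MB !size_cat !size_enc.
    have := hsmall _ _ (pres0 S a); have := hsmall _ _ (pres2 S a).
    move: hwl hSI; set bl := b * l; lia.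
have hmin : forall k, SumIndex_le m k -> SI <= k.
  move=> k hk; rewrite /SI /SumIndex; case: ex_minnP => k0 _ hk0; apply: hk0.
  by rewrite /SumIndex_leb; case: excluded_middle_informative.
have := hmin _ hle; lia.
Qed.
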